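(* Let $H = C_5 + C_5 + C_5 + C_5 + C_5 + C_5$ be the Zykov sum of six disjoint $5$-cycles. Let $v\in V(H)$ and let $S$ be the subgraph of $H$ induced by the vertices of the five $5$-cycles not containing $v$. Suppose the edges of $H$ are colored in three colors $1,2,3$ with no monochromatic triangle. Then for each color $i\in\{1,2,3\}$ we have $N_i(v)\cap V(S)\neq\emptyset$, where $N_i(v)$ is the set of vertices $u$ adjacent to $v$ such that the edge $vu$ has color $i$.
   Context: All graphs are finite, undirected, without loops or multiple edges. The Zykov sum $G_1+G_2$ of two vertex-disjoint graphs is obtained by joining every vertex of $G_1$ to every vertex of $G_2$. *)

(* Defs.v *)
From mathcomp Require Import all_boot.
Set Implicit Arguments. Unset Strict Implicit. Unset Printing Implicit Defensive.

(* Vertices of H = C5 + C5 + C5 + C5 + C5 + C5: pairs (k, j) with k : 'I_6 the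
   index of the 5-cycle and j : 'I_5 the position on that cycle. *)
Definition HV := ('I_6 * 'I_5)%type.

Definition c5adj (a b : 'I_5) : bool :=
  ((a.+1 %% 5) == b) || ((b.+1 %% 5) == a).

Definition Hadj (x y : HV) : bool :=
  if x.1 == y.1 then c5adj x.2 y.2 else true.

(* An edge 3-colouring is a symmetric colour function (only its values on
   edges matter). *)
Definition edge_coloring (c : HV -> HV -> 'I_3) : Prop :=
  forall x y, Hadj x y -> c x y = c y x.

Definition no_mono_triangle (c : HV -> HV -> 'I_3) : Prop :=
  forall x y z, Hadj x y -> Hadj y z -> Hadj x z ->
    ~ (c x y = c y z /\ c y z = c x z).

Definition Ncol (c : HV -> HV -> 'I_3) (i : 'I_3) (v : HV) : {set HV} :=
  [set u | Hadj v u && (c v u == i)].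

Definition VS (v : HV) : {set HV} := [set u | u.1 != v.1].

(* Main.v *)
Require Import Defs.
From mathcomp Require Import all_boot zify.
Set Implicit Arguments. Unset Strict Implicit. Unset Printing Implicit Defensive.

Definition tri (x y z : bool) := (x == y) && (y == z).
Lemma allbP (P : bool -> bool) : all P [:: true; false] -> forall b, P b.
Proof. by move=> /and3P[? ? _] []. Qed.
Lemma R33c : all (fun b01 => all (fun b02 => all (fun b03 => all (fun b04 => all (fun b05 => all (fun b12 => all (fun b13 => all (fun b14 => all (fun b15 => all (fun b23 => all (fun b24 => all (fun b25 => all (fun b34 => all (fun b35 => all (fun b45 => [|| tri b01 b12 b02, tri b01 b13 b03, tri b01 b14 b04, tri b01 b15 b05, tri b02 b23 b03, tri b02 b24 b04, tri b02 b25 b05, tri b03 b34 b04, tri b03 b35 b05, tri b04 b45 b05, tri b12 b23 b13, tri b12 b24 b14, tri b12 b25 b15, tri b13 b34 b14, tri b13 b35 b15, tri b14 b45 b15, tri b23 b34 b24, tri b23 b35 b25, tri b24 b45 b25 | tri b34 b45 b35]) [:: true; false]) [:: true; false]) [:: true; false]) [:: true; false]) [:: true; false]) [:: true; false]) [:: true; false]) [:: true; false]) [:: true; false]) [:: true; false]) [:: true; false]) [:: true; false]) [:: true; false]) [:: true; false]) [:: true; false].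
Proof. by vm_compute. Qed.
Lemma R33b b01 b02 b03 b04 b05 b12 b13 b14 b15 b23 b24 b25 b34 b35 b45 : [|| tri b01 b12 b02, tri b01 b13 b03, tri b01 b14 b04, tri b01 b15 b05, tri b02 b23 b03, tri b02 b24 b04, tri b02 b25 b05, tri b03 b34 b04, tri b03 b35 b05, tri b04 b45 b05, tri b12 b23 b13, tri b12 b24 b14, tri b12 b25 b15, tri b13 b34 b14, tri b13 b35 b15, tri b14 b45 b15, tri b23 b34 b24, tri b23 b35 b25, tri b24 b45 b25 | tri b34 b45 b35].
Proof.
have H := R33c.
have {H} H := (@allbP _ H b01).
have {H} H := (@allbP _ H b02).
have {H} H := (@allbP _ H b03).
have {H} H := (@allbP _ H b04).
have {H} H := (@allbP _ H b05).
have {H} H := (@allbP _ H b12).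
have {H} H := (@allbP _ H b13).
have {H} H := (@allbP _ H b14).
have {H} H := (@allbP _ H b15).
have {H} H := (@allbP _ H b23).
have {H} H := (@allbP _ H b24).
have {H} H := (@allbP _ H b25).
have {H} H := (@allbP _ H b34).
have {H} H := (@allbP _ H b35).
have {H} H := (@allbP _ H b45).
exact H.
Qed.
Notation O6 k := (@Ordinal 6 k isT).
Lemma R33 (E : 'I_6 -> 'I_6 -> bool) : exists i j k : 'I_6, [/\ i < j, j < k & tri (E i j) (E j k) (E i k)].
Proof.
have h := R33b (E (O6 0) (O6 1)) (E (O6 0) (O6 2)) (E (O6 0) (O6 3)) (E (O6 0) (O6 4)) (E (O6 0) (O6 5)) (E (O6 1) (O6 2)) (E (O6 1) (O6 3)) (E (O6 1) (O6 4)) (E (O6 1) (O6 5)) (E (O6 2) (O6 3)) (E (O6 2) (O6 4)) (E (O6 2) (O6 5)) (E (O6 3) (O6 4)) (E (O6 3) (O6 5)) (E (O6 4) (O6 5)).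
repeat (case/orP: h => h; first by do 3 eexists; split; last exact h).
by do 3 eexists; split; last exact h.
Qed.

Definition succ5 (x : 'I_5) : 'I_5 := nth (@Ordinal 5 0 isT) [:: @Ordinal 5 1 isT; @Ordinal 5 2 isT; @Ordinal 5 3 isT; @Ordinal 5 4 isT; @Ordinal 5 0 isT] x.
Definition ords5 : seq 'I_5 := [:: @Ordinal 5 0 isT; @Ordinal 5 1 isT; @Ordinal 5 2 isT; @Ordinal 5 3 isT; @Ordinal 5 4 isT].
Definition cl (p : 'I_5 -> bool) (b : bool) : seq 'I_5 :=
  match [seq x <- ords5 | (p x == b) && (p (succ5 x) == b)] with
  | x :: _ => [:: x; succ5 x]
  | [::] => match [seq x <- ords5 | p x == b] with x :: _ => [:: x] | [::] => [::] end
  end.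
Definition clP (p : 'I_5 -> bool) :=
   [&& pairwise c5adj (cl p true), all (fun x => p x == true) (cl p true),
       pairwise c5adj (cl p false), all (fun x => p x == false) (cl p false) &
   [|| 3 <= size (cl p true) + size (cl p false),
      (size (cl p true) == 2) && (size (cl p false) == 0) |
      (size (cl p true) == 0) && (size (cl p false) == 2)]].
Definition bl := [:: true; false].
Lemma cl_check : all (fun b0 => all (fun b1 => all (fun b2 => all (fun b3 => all (fun b4 =>
   clP (fun x => nth false [:: b0; b1; b2; b3; b4] x)) bl) bl) bl) bl) bl.
Proof. by vm_compute. Qed.
Definition ords3 : seq 'I_3 := [:: @Ordinal 3 0 isT; @Ordinal 3 1 isT; @Ordinal 3 2 isT].
Lemma col3c : all (fun d => all (fun a => all (fun x => all (fun y =>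
  (a != d) ==> (x != d) ==> (y != d) ==> ((x == a) == (y == a)) ==> (x == y)) ords3) ords3) ords3) ords3.
Proof. by vm_compute. Qed.

Lemma mem_ords3 (x : 'I_3) : x \in ords3.
Proof. by case: x => [[|[|[|m]]] h]. Qed.

Lemma col3 (d a x y : 'I_3) : a != d -> x != d -> y != d -> (x == a) = (y == a) -> x = y.
Proof.
move=> h1 h2 h3 h4.
move/allP: col3c => /(_ d (mem_ords3 d)) /allP /(_ a (mem_ords3 a))
  /allP /(_ x (mem_ords3 x)) /allP /(_ y (mem_ords3 y)).
by rewrite h1 h2 h3 h4 eqxx => /eqP.
Qed.

Lemma cl_ext (p q : 'I_5 -> bool) b : (forall x, p x = q x) -> cl p b = cl q b.
Proof.
move=> H; rewrite /cl.
have -> : [seq x <- ords5 | (p x == b) && (p (succ5 x) == b)] =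
          [seq x <- ords5 | (q x == b) && (q (succ5 x) == b)]
  by apply: eq_filter => x; rewrite !H.
have -> : [seq x <- ords5 | p x == b] = [seq x <- ords5 | q x == b]
  by apply: eq_filter => x; rewrite !H.
by [].
Qed.

Lemma clP_ext (p q : 'I_5 -> bool) : (forall x, p x = q x) -> clP p = clP q.
Proof.
move=> H; rewrite /clP !(cl_ext _ H).
have e1 b : all (fun x => p x == b) (cl q b) = all (fun x => q x == b) (cl q b)
  by apply: eq_all => x /=; rewrite H.
by rewrite !e1.
Qed.

Lemma clP_all (p : 'I_5 -> bool) : clP p.
Proof.
have H := cl_check.
have {H} H := (@allbP _ H (p (@Ordinal 5 0 isT))).
have {H} H := (@allbP _ H (p (@Ordinal 5 1 isT))).
have {H} H := (@allbP _ H (p (@Ordinal 5 2 isT))).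
have {H} H := (@allbP _ H (p (@Ordinal 5 3 isT))).
have {H} H := (@allbP _ H (p (@Ordinal 5 4 isT))).
rewrite (clP_ext (q := fun x => nth false [:: p (@Ordinal 5 0 isT); p (@Ordinal 5 1 isT);
  p (@Ordinal 5 2 isT); p (@Ordinal 5 3 isT); p (@Ordinal 5 4 isT)] x)) //.
case=> [[|[|[|[|[|m]]]]] h] //=; congr p; exact: val_inj.
Qed.

Definition other (d : 'I_3) : 'I_3 :=
  if val d == 0 then @Ordinal 3 1 isT else @Ordinal 3 0 isT.
Lemma other_neq d : other d != d.
Proof. by case: d => [[|[|[|m]]] h]. Qed.

Lemma no_K6 (c : HV -> HV -> 'I_3) (f : 'I_6 -> HV) (d : 'I_3) :
  no_mono_triangle c ->
  (forall i j : 'I_6, i < j -> Hadj (f i) (f j)) ->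
  (forall i j : 'I_6, i < j -> c (f i) (f j) != d) -> False.
Proof.
move=> hnm hadj hnd.
have [i [j [k [hij hjk /andP [/eqP e1 /eqP e2]]]]] :=
  R33 (fun p q => c (f p) (f q) == other d).
have hik : i < k by apply: ltn_trans hjk.
apply: (hnm (f i) (f j) (f k) (hadj _ _ hij) (hadj _ _ hjk) (hadj _ _ hik)).
split; apply: (col3 (other_neq d)) => //; by apply: hnd.
Qed.

Lemma kclique (c : HV -> HV -> 'I_3) (v : HV) (s : seq HV) :
  no_mono_triangle c -> pairwise Hadj s -> 6 <= size s ->
  all (fun u => u.1 != v.1) s ->
  (forall x y, x \in s -> y \in s -> c v x = c v y) -> False.
Proof.
move=> hnm hpw hsz hS hcol.
pose f (k : 'I_6) := nth v s k.
have fin (k : 'I_6) : f k \in s by apply: mem_nth; apply: leq_trans hsz; case: k.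
have hadj (i j : 'I_6) : i < j -> Hadj (f i) (f j).
  move=> hij; move/(pairwiseP v): hpw; apply => //; rewrite inE /=;
  apply: leq_trans hsz; by case: i hij; case: j.
have hv (k : 'I_6) : Hadj v (f k).
  by move/allP: hS => /(_ _ (fin k)); rewrite /Hadj eq_sym => /negbTE ->.
apply: (no_K6 (f := f) (d := c v (f (@Ordinal 6 0 isT))) hnm hadj) => i j hij.
apply/eqP => he.
apply: (hnm v (f i) (f j) (hv i) (hadj _ _ hij) (hv j)).
rewrite he (hcol (f i) (f (@Ordinal 6 0 isT))) ?fin //.
by rewrite (hcol (f j) (f (@Ordinal 6 0 isT))) ?fin.
Qed.

Definition blk (v : HV) (P : HV -> bool) (b : bool) (t : 'I_5) : seq HV :=
  [seq (lift v.1 t, x) | x <- cl (fun x => P (lift v.1 t, x)) b].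

Lemma pw_flat v P b (ts : seq 'I_5) : uniq ts ->
  pairwise Hadj (flatten [seq blk v P b t | t <- ts]).
Proof.
elim: ts => [|t ts IH] //= /andP [tn /IH {}IH].
rewrite pairwise_cat IH andbT; apply/andP; split.
  apply/allrelP => x y /mapP [x' _ ->] /flattenP [s /mapP [t' t'in ->] /mapP [y' _ ->]].
  rewrite /Hadj /= (inj_eq (@lift_inj _ _)).
  by case: eqP => // et; move: tn; rewrite et t'in.
rewrite /blk pairwise_map.
have := clP_all (fun x => P (lift v.1 t, x)); rewrite /clP => /and5P [h1 _ h3 _ _].
clear IH; apply: (sub_pairwise (r := c5adj)); last by case: b.
by move=> x y; rewrite /relpre /Hadj /= eqxx.
Qed.

Lemma all_flat v P b (ts : seq 'I_5) :
  all (fun u => (u.1 != v.1) && (P u == b)) (flatten [seq blk v P b t | t <- ts]).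
Proof.
apply/allP => u /flattenP [s /mapP [t _ ->] /mapP [x hx ->]] /=.
rewrite eq_sym neq_lift /=.
have := clP_all (fun x => P (lift v.1 t, x)); rewrite /clP => /and5P [_ h2 _ h4 _].
by case: b hx => hx; [move/allP: h2 => /(_ _ hx) | move/allP: h4 => /(_ _ hx)].
Qed.

Lemma arith (s0 s1 s2 s3 s4 r0 r1 r2 r3 r4 : nat) :
  (3 <= s0 + r0 \/ (s0 = 2 /\ r0 = 0) \/ (s0 = 0 /\ r0 = 2)) ->
  (3 <= s1 + r1 \/ (s1 = 2 /\ r1 = 0) \/ (s1 = 0 /\ r1 = 2)) ->
  (3 <= s2 + r2 \/ (s2 = 2 /\ r2 = 0) \/ (s2 = 0 /\ r2 = 2)) ->
  (3 <= s3 + r3 \/ (s3 = 2 /\ r3 = 0) \/ (s3 = 0 /\ r3 = 2)) ->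
  (3 <= s4 + r4 \/ (s4 = 2 /\ r4 = 0) \/ (s4 = 0 /\ r4 = 2)) ->
  6 <= s0 + (s1 + (s2 + (s3 + (s4 + 0)))) \/ 6 <= r0 + (r1 + (r2 + (r3 + (r4 + 0)))).
Proof. lia. Qed.

Lemma cl_size (p : 'I_5 -> bool) :
  let s := size (cl p true) in let r := size (cl p false) in
  (3 <= s + r \/ (s = 2 /\ r = 0) \/ (s = 0 /\ r = 2)).
Proof.
have := clP_all p; rewrite /clP => /and5P [_ _ _ _ /or3P [h|/andP[/eqP-> /eqP->]|/andP[/eqP-> /eqP->]]]; by [left|right;left|right;right].
Qed.

Theorem lemma4 (c : HV -> HV -> 'I_3) (v : HV) :
  edge_coloring c -> no_mono_triangle c ->
  forall i : 'I_3, Ncol c i v :&: VS v != set0.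
Proof.
move=> _ hnm i; apply/negP => /eqP H0.
have Hi (u : HV) : u.1 != v.1 -> c v u != i.
  move=> hu; apply/negP => /eqP hc.
  have : u \in Ncol c i v :&: VS v by rewrite !inE /Hadj eq_sym (negbTE hu) hc eqxx.
  by rewrite H0 inE.
pose a := other i.
pose P (u : HV) := c v u == a.
pose L b := flatten [seq blk v P b t | t <- ords5].
have main b : 6 <= size (L b) -> False.
  move=> hsz; apply: (kclique (v := v) hnm (pw_flat v P b (ts := ords5) isT) hsz).
    by apply/allP => u /(allP (all_flat v P b ords5)) /andP [].
  move=> x y /(allP (all_flat v P b ords5)) /andP [hx /eqP px]
             /(allP (all_flat v P b ords5)) /andP [hy /eqP py].
  apply: (col3 (other_neq i)); rewrite ?Hi //.
  by rewrite -/(P x) -/(P y) px py.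
have := arith (cl_size (fun x => P (lift v.1 (@Ordinal 5 0 isT), x)))
  (cl_size (fun x => P (lift v.1 (@Ordinal 5 1 isT), x)))
  (cl_size (fun x => P (lift v.1 (@Ordinal 5 2 isT), x)))
  (cl_size (fun x => P (lift v.1 (@Ordinal 5 3 isT), x)))
  (cl_size (fun x => P (lift v.1 (@Ordinal 5 4 isT), x))).
have sz b : size (L b) = size (cl (fun x => P (lift v.1 (@Ordinal 5 0 isT), x)) b) +
   (size (cl (fun x => P (lift v.1 (@Ordinal 5 1 isT), x)) b) +
   (size (cl (fun x => P (lift v.1 (@Ordinal 5 2 isT), x)) b) +
   (size (cl (fun x => P (lift v.1 (@Ordinal 5 3 isT), x)) b) +
   (size (cl (fun x => P (lift v.1 (@Ordinal 5 4 isT), x)) b) + 0)))).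
  by rewrite /L /= !size_cat /blk !size_map.
by rewrite -!sz => -[/main|/main].
Qed.
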